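(* For $n\le 5$ (with $n\ge 4$), any two distinct vertices of $\mathrm{PYR}(n)$ are adjacent, i.e. the skeleton of $\mathrm{PYR}(n)$ is a complete graph. For $n\ge 6$, $\mathrm{PYR}(n)$ has a pair of non-adjacent vertices; e.g. for $n=6$ the vertices with codes $\langle 1,0,0\rangle$ and $\langle 0,1,0\rangle$ are non-adjacent.
   Context: Let $K_n$ be the complete undirected graph on vertex set $\{1,\dots,n\}$ with edge set $E$. A Hamiltonian cycle $\langle 1,i_1,\dots,i_r,n,j_1,\dots,j_{n-r-2}\rangle$ is called a pyramidal tour if $i_1<i_2<\dots<i_r$ and $j_1>j_2>\dots>j_{n-r-2}$; tours are undirected. Let $PT_n$ be the set of all pyramidal tours. For $x\in PT_n$ its characteristic vector $x^v\in\mathbb{R}^E$ has $x^v_e=1$ if edge $e$ lies in $x$ and $0$ otherwise. The pyramidal tours polytope is $\mathrm{PYR}(n)=\operatorname{conv}\{x^v : x\in PT_n\}$. Every pyramidal tour contains the edge $\{1,2\}$; the tour is oriented so that vertex $2$ belongs to the increasing part. The code of $x$ is the $0/1$ vector $x^c=(x^c_3,\dots,x^c_{n-1})$ with $x^c_i=1$ if vertex $i$ is visited in the increasing part of $x$ and $x^c_i=0$ otherwise; $x\mapsto x^c$ is a bijection from $PT_n$ onto $\{0,1\}^{n-3}$. Two vertices are adjacent if the segment joining them is a one-dimensional face of the polytope. *)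

(* Defs.v *)
From HB Require Import structures.
From mathcomp Require Import all_boot all_order all_algebra.
Set Implicit Arguments. Unset Strict Implicit. Unset Printing Implicit Defensive.
Import Order.TTheory GRing.Theory Num.Theory.
Local Open Scope ring_scope.

(* Vertices 1..n of K_n are represented by ordinals 0..n-1 of 'I_n
   (vertex k  <->  ordinal with value k-1). *)

Definition edge (n : nat) := {e : 'I_n * 'I_n | (e.1 < e.2)%N}.

(* A tour is written as the sequence of its vertices starting from vertex 1.
   [pyramidal n s]: s is a Hamiltonian cycle <1, i_1..i_r, n, j_1..j_m>
   with i_1 < ... < i_r and j_1 > ... > j_m. *)
Definition pyramidal (n : nat) (s : seq 'I_n) : Prop :=
  perm_eq s (enum 'I_n) /\
  exists a b : seq nat,
    map val s = 0%N :: a ++ n.-1 :: b /\ sorted ltn a /\ sorted gtn b.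

Definition incr_part (n : nat) (s : seq 'I_n) : seq nat :=
  let s' := map val s in take (index n.-1 s') (behead s').

(* The code x^c = (x^c_3, ..., x^c_{n-1}): the tour is oriented so that
   vertex 2 (value 1) lies in the increasing part; x^c_i = 1 iff vertex i
   (value i-1) is in the increasing part. *)
Definition code (n : nat) (s : seq 'I_n) : seq bool :=
  let a := incr_part s in
  [seq (if (1%N \in a) then i \in a else i \notin a) | i <- iota 2 (n - 3)%N].

Definition tour_has_edge (n : nat) (s : seq 'I_n) (e : edge n) : bool :=
  has (fun p : 'I_n * 'I_n =>
         ((p.1 == (val e).1) && (p.2 == (val e).2)) ||
         ((p.1 == (val e).2) && (p.2 == (val e).1)))
      (zip s (rot 1 s)).

Definition charv (R : realFieldType) (n : nat) (s : seq 'I_n) : edge n -> R :=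
  fun e => if tour_has_edge s e then 1 else 0.

Definition dotE (R : realFieldType) (n : nat) (c p : edge n -> R) : R :=
  \sum_(e : edge n) c e * p e.

Definition in_PYR (R : realFieldType) (n : nat) (p : edge n -> R) : Prop :=
  exists (ts : seq (seq 'I_n)) (w : seq R),
    (forall t, t \in ts -> pyramidal t) /\
    size w = size ts /\
    (forall l, l \in w -> 0 <= l) /\
    \sum_(l <- w) l = 1 /\
    p = (fun e => \sum_(i < size ts) nth 0 w i * charv R (nth [::] ts i) e).

Definition in_segment (R : realFieldType) (n : nat) (u v p : edge n -> R) : Prop :=
  exists t : R, 0 <= t <= 1 /\ p = (fun e => t * u e + (1 - t) * v e).

Definition adjacent (R : realFieldType) (n : nat) (u v : edge n -> R) : Prop :=
  u <> v /\
  exists c : edge n -> R, forall p : edge n -> R,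
    (in_PYR p /\ forall q, in_PYR q -> dotE c q <= dotE c p) <-> in_segment u v p.

(* Main.v *)
Require Import Defs.
From HB Require Import structures.
From mathcomp Require Import all_boot all_order all_algebra.
Import Order.TTheory GRing.Theory Num.Theory.
From Stdlib Require Import FunctionalExtensionality.
From mathcomp Require Import lra zify.
Set Implicit Arguments. Unset Strict Implicit.

Definition mkord n (i : nat) : option 'I_n :=
  (if i < n as b return (i < n) = b -> option 'I_n then fun H => Some (Ordinal H) else fun _ => None) (erefl _).
Definition myords n : seq 'I_n := pmap (mkord n) (iota 0 n).
Definition mkedge n (p : 'I_n * 'I_n) : option (edge n) :=
  (if (p.1 < p.2)%N as b return ((p.1 < p.2)%N) = b -> option (edge n) then fun H => Some (exist _ p H) else fun _ => None) (erefl _).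
Definition myedges n : seq (edge n) := pmap (@mkedge n) [seq (i, j) | i <- myords n, j <- myords n].
Definition pyrb n (s : seq 'I_n) : bool := let v := map val s in
 (head 1%N v == 0%N) && has (fun k => (nth 0%N (behead v) k == n.-1) && sorted ltn (take k (behead v)) && sorted gtn (drop k.+1 (behead v))) (iota 0 (size v)).
Definition Lp n := filter (@pyrb n) (permutations (myords n)).
Definition th n (s : seq 'I_n) e := tour_has_edge s e.
Definition cntz n (x y z : seq 'I_n) := sumn [seq (th x e + th y e) * th z e | e <- myedges n].

Lemma mkordE n (i : 'I_n) : mkord n i = Some i.
Proof.
case: i => m Hm; rewrite /mkord /=.
have H : forall b (e : (m < n) = b), (if b as b' return (m < n) = b' -> option 'I_n
   then fun H => Some (Ordinal H) else fun _ => None) e = Some (Ordinal Hm).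
  by case => e; [congr Some; apply: val_inj | rewrite Hm in e].
exact: H.
Qed.

Lemma myords_all n (i : 'I_n) : i \in myords n.
Proof. by rewrite /myords mem_pmap; apply/mapP; exists (val i); rewrite ?mem_iota ?mkordE //=. Qed.

Lemma mkedgeE n (e : edge n) : mkedge (val e) = Some e.
Proof.
case: e => p Hp; rewrite /mkedge /=.
have H : forall b (e : (p.1 < p.2)%N = b), (if b as b' return (p.1 < p.2)%N = b' -> option (edge n)
   then fun H => Some (exist _ p H) else fun _ => None) e = Some (exist _ p Hp).
  by case => e; [congr Some; apply: val_inj | rewrite Hp in e].
exact: H.
Qed.

Lemma myedges_all n (e : edge n) : e \in myedges n.
Proof.
rewrite /myedges mem_pmap; apply/mapP; exists (val e); rewrite ?mkedgeE //.
case: (val e) => i j; apply/allpairsP; exists (i, j) => /=; by rewrite !myords_all.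
Qed.

Lemma sum_edges n (F : edge n -> nat) : uniq (myedges n) ->
  (\sum_(e : edge n) F e)%N = sumn [seq F e | e <- myedges n].
Proof.
move=> U; rewrite sumnE big_map; apply: perm_big.
by apply: uniq_perm; rewrite ?index_enum_uniq // => e; rewrite mem_index_enum myedges_all.
Qed.

Lemma pyr_pyrb n (s : seq 'I_n) : pyramidal s -> pyrb s.
Proof.
case=> _ [a [b [Hs [Ha Hb]]]].
rewrite /pyrb Hs; apply/andP; split; first by []. apply/hasP; exists (size a).
  by rewrite mem_iota /= size_cat /= addnS ltnS leq_addr.
rewrite nth_cat ltnn subnn eqxx /= take_size_cat // Ha /=.
by rewrite drop_cat ltnNge leqnSn /= subSnn /= drop0.
Qed.

Lemma pyr_Lp n (s : seq 'I_n) : uniq (myords n) -> pyramidal s -> s \in Lp n.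
Proof.
move=> U Hp; rewrite /Lp mem_filter pyr_pyrb //= mem_permutations.
case: Hp => Hp _; apply: (perm_trans Hp).
by apply: uniq_perm; rewrite ?enum_uniq // => i; rewrite mem_enum myords_all.
Qed.
Local Open Scope ring_scope.

Section Real.
Variable R : realFieldType.

Lemma charvE n (s : seq 'I_n) e : charv R s e = (th s e)%:R.
Proof. by rewrite /charv /th; case: tour_has_edge. Qed.

Lemma dotE_comb n (c : edge n -> R) (ts : seq (seq 'I_n)) (w : seq R) :
  dotE c (fun e => \sum_(i < size ts) nth 0 w i * charv R (nth [::] ts i) e) =
  \sum_(i < size ts) nth 0 w i * dotE c (charv R (nth [::] ts i)).
Proof.
rewrite /dotE; under eq_bigr do rewrite mulr_sumr.
rewrite exchange_big; apply: eq_bigr => i _; rewrite mulr_sumr.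
by apply: eq_bigr => e _; rewrite mulrCA.
Qed.

Lemma dotE_lin2 n (c u v : edge n -> R) a b :
  dotE c (fun e => a * u e + b * v e) = a * dotE c u + b * dotE c v.
Proof.
rewrite /dotE !mulr_sumr -big_split; apply: eq_bigr => e _.
by rewrite mulrDr [c e * (a * _)]mulrCA [c e * (b * _)]mulrCA.
Qed.

Lemma in_PYR_seg n (x y : seq 'I_n) t : pyramidal x -> pyramidal y -> 0 <= t <= 1 ->
  in_PYR (fun e => t * charv R x e + (1 - t) * charv R y e).
Proof.
move=> Hx Hy /andP[t0 t1]; exists [:: x; y], [:: t; 1 - t]; split.
  by move=> z; rewrite !inE => /orP[] /eqP ->.
split=> //; split.
  by move=> l; rewrite !inE => /orP[] /eqP ->; rewrite ?subr_ge0.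
split; first by rewrite !big_cons big_nil addr0 addrC subrK.
apply: functional_extensionality => e.
by rewrite !big_ord_recl big_ord0 addr0.
Qed.

Lemma in_PYR_vtx n (x : seq 'I_n) : pyramidal x -> in_PYR (charv R x).
Proof.
move=> Hx; exists [:: x], [:: 1]; split.
  by move=> z; rewrite !inE => /eqP ->.
split=> //; split.
  by move=> l; rewrite !inE => /eqP ->.
split; first by rewrite big_cons big_nil addr0.
apply: functional_extensionality => e.
by rewrite big_ord_recl big_ord0 addr0 mul1r.
Qed.

Lemma sumw_nth (w : seq R) m : size w = m -> \sum_(i < m) nth 0 w i = \sum_(l <- w) l.
Proof. by move=> <-; rewrite (big_nth 0) big_mkord. Qed.

Lemma PYR_le n (c : edge n -> R) M q :
  (forall z, pyramidal z -> dotE c (charv R z) <= M) -> in_PYR q -> dotE c q <= M.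
Proof.
move=> Hz [ts [w [Hts [Hsz [Hw [H1 ->]]]]]].
rewrite dotE_comb; apply: (@le_trans _ _ (\sum_(i < size ts) nth 0 w i * M)).
  apply: ler_sum => i _; apply: ler_wpM2l.
    by apply: Hw; apply: mem_nth; rewrite Hsz.
  by apply: Hz; apply: Hts; apply: mem_nth.
by rewrite -mulr_suml sumw_nth // H1 mul1r.
Qed.


Lemma adj_crit n (x y : seq 'I_n) (c : edge n -> R) (M : R) :
  charv R x <> charv R y -> pyramidal x -> pyramidal y ->
  (forall z, pyramidal z -> dotE c (charv R z) <= M) ->
  dotE c (charv R x) = M -> dotE c (charv R y) = M ->
  (forall z, pyramidal z -> dotE c (charv R z) = M ->
     charv R z = charv R x \/ charv R z = charv R y) ->
  adjacent (charv R x) (charv R y).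
Proof.
move=> Hxy Hx Hy Hle HxM HyM Heq; split=> //; exists c => p; split; last first.
  case=> t [Ht ->]; split; first exact: in_PYR_seg.
  move=> q Hq; rewrite dotE_lin2 HxM HyM -mulrDl addrC subrK mul1r.
  exact: PYR_le Hq.
case=> [[ts [w [Hts [Hsz [Hw [H1 Hp]]]]]] Hmax].
have HM : M <= dotE c p by rewrite -HxM; apply: Hmax; apply: in_PYR_vtx.
have Hwi : forall i : 'I_(size ts), 0 <= nth 0 w i.
  by move=> i; apply: Hw; apply: mem_nth; rewrite Hsz.
have Hpi : forall i : 'I_(size ts), pyramidal (nth [::] ts i).
  by move=> i; apply: Hts; apply: mem_nth.
have Hs : \sum_(i < size ts) nth 0 w i * (M - dotE c (charv R (nth [::] ts i)))
          = M - dotE c p.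
  rewrite Hp dotE_comb; under eq_bigr do rewrite mulrBr.
  by rewrite sumrB -mulr_suml sumw_nth // H1 mul1r.
have Hnn : forall i : 'I_(size ts), 0 <= nth 0 w i * (M - dotE c (charv R (nth [::] ts i))).
  by move=> i; rewrite mulr_ge0 // subr_ge0 Hle.
have Hs0 : \sum_(i < size ts) nth 0 w i * (M - dotE c (charv R (nth [::] ts i))) = 0.
  apply/eqP; rewrite eq_le sumr_ge0 // andbT Hs subr_le0 //.
have Hcase : forall i : 'I_(size ts), nth 0 w i = 0 \/
    charv R (nth [::] ts i) = charv R x \/ charv R (nth [::] ts i) = charv R y.
  move=> i; have := psumr_eq0P (fun i _ => Hnn i) Hs0; move=> /(_ i isT).
  move/eqP; rewrite mulf_eq0 subr_eq0 => /orP[/eqP ->|/eqP HMi]; first by left.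
  by right; apply: Heq; rewrite -?HMi.
pose b (i : 'I_(size ts)) := [forall e, th (nth [::] ts i) e == th x e].
have Hb : forall i : 'I_(size ts), b i -> charv R (nth [::] ts i) = charv R x.
  move=> i /forallP Hbi; apply: functional_extensionality => e.
  by rewrite !charvE (eqP (Hbi e)).
have Hnb : forall i : 'I_(size ts), charv R (nth [::] ts i) = charv R x -> b i.
  move=> i Hi; apply/forallP => e; have := congr1 (fun f => f e) Hi.
  by rewrite !charvE => /eqP; rewrite eqr_nat; case: (th _ e); case: (th _ e).
exists (\sum_(i < size ts) nth 0 w i * (b i)%:R); split.
  apply/andP; split; first by apply: sumr_ge0 => i _; rewrite mulr_ge0.
  apply: (@le_trans _ _ (\sum_(i < size ts) nth 0 w i)); last by rewrite sumw_nth // H1.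
  apply: ler_sum => i _.
  by case: (b i); rewrite ?mulr1 ?mulr0 ?Hwi ?lexx.
rewrite Hp; apply: functional_extensionality => e.
have -> : 1 - \sum_(i < size ts) nth 0 w i * (b i)%:R =
          \sum_(i < size ts) nth 0 w i * (1 - (b i)%:R).
  rewrite -[X in X - _ = _]H1 -(sumw_nth Hsz) -sumrB.
  by apply: eq_bigr => i _; rewrite mulrBr mulr1.
rewrite !mulr_suml -big_split; apply: eq_bigr => i _ /=.
case: (Hcase i) => [->|[HX|HY]]; first by rewrite !mul0r addr0.
  by rewrite HX (Hnb _ HX) mulr1 subrr mulr0 mul0r addr0.
case Hbi: (b i); first by rewrite (Hb _ Hbi) mulr1 subrr mulr0 mul0r addr0.
by rewrite HY mulr0 mul0r add0r subr0 mulr1.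
Qed.

Lemma nonadj n (x y x' y' : seq 'I_n) : pyramidal x' -> pyramidal y' ->
  (forall e, (th x e + th y e = th x' e + th y' e)%N) ->
  (exists e, th x' e != th x e) -> (exists e, th x' e != th y e) ->
  ~ adjacent (charv R x) (charv R y).
Proof.
move=> Hx' Hy' Hsum [e1 He1] [e2 He2] [_ [c Hc]].
have segP : forall t, 0 <= t <= 1 ->
   forall q, in_PYR q -> dotE c q <= dotE c (fun e => t * charv R x e + (1 - t) * charv R y e).
  by move=> t Ht; case: (proj2 (Hc _) (ex_intro _ t (conj Ht erefl))).
pose h : R := 2^-1.
have h01 : 0 <= h <= 1 by rewrite /h invr_ge0 ler0n /= invf_le1 ?ler1n ?ltr0n.
have hh : 1 - h = h.
  by apply: (@mulIf _ 2); rewrite ?pnatr_eq0 // mulrBl mulVf ?pnatr_eq0 // mul1r; lra.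
have Hm := segP h h01.
have Em : (fun e => h * charv R x e + (1 - h) * charv R y e) =
          (fun e => h * charv R x' e + (1 - h) * charv R y' e).
  apply: functional_extensionality => e; rewrite hh -!mulrDr; congr (h * _).
  by rewrite !charvE -!natrD Hsum.
rewrite Em in Hm.
have a1 := Hm _ (in_PYR_vtx Hx'); have a2 := Hm _ (in_PYR_vtx Hy').
rewrite dotE_lin2 hh in a1 a2 Hm.
have HX' : in_segment (charv R x) (charv R y) (charv R x').
  apply/Hc; split; first exact: in_PYR_vtx.
  move=> q Hq; apply: (le_trans (Hm q Hq)).
  rewrite /h in a1 a2 *; lra.
case: HX' => t [/andP[t0 t1] Ht].
have E1 := congr1 (fun f => f e1) Ht; have E2 := congr1 (fun f => f e2) Ht.
move: E1 E2 He1 He2 => /=; rewrite !charvE.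
case: (th x' e1); case: (th x e1); case: (th y e1);
case: (th x' e2); case: (th x e2); case: (th y e2) => //= E1 E2 _ _; lra.
Qed.


Definition eqv n (a b : seq 'I_n) := all (fun e => th a e == th b e) (myedges n).

Lemma eqv_charv n (a b : seq 'I_n) : eqv a b -> charv R a = charv R b.
Proof.
move=> /allP H; apply: functional_extensionality => e.
by rewrite !charvE (eqP (H e (myedges_all e))).
Qed.

Lemma dot_cnt n (x y z : seq 'I_n) : uniq (myedges n) ->
  dotE (fun e => charv R x e + charv R y e) (charv R z) = (cntz x y z)%:R.
Proof.
move=> U; rewrite /dotE.
under eq_bigr do rewrite !charvE -natrD -natrM.
by rewrite -natr_sum sum_edges.
Qed.

Definition F1 n := all (fun x => all (fun y => eqv x y ||
   ((cntz x y y == cntz x y x) && all (fun z => (cntz x y z <= cntz x y x)%N &&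
      ((cntz x y z == cntz x y x) ==> (eqv z x || eqv z y))) (Lp n))) (Lp n)) (Lp n).

Lemma part1 n : uniq (myords n) -> uniq (myedges n) -> F1 n ->
  forall x y : seq 'I_n, pyramidal x -> pyramidal y ->
  charv R x <> charv R y -> adjacent (charv R x) (charv R y).
Proof.
move=> Uo Ue /allP HF x y Hx Hy Hxy.
have /allP/(_ y (pyr_Lp Uo Hy)) := HF x (pyr_Lp Uo Hx).
case/orP => [/eqv_charv //|/andP[/eqP Hyx /allP Hz]].
apply: (adj_crit (c := fun e => charv R x e + charv R y e) (M := (cntz x y x)%:R)) => //.
- by move=> z Hzp; rewrite dot_cnt // ler_nat; case/andP: (Hz z (pyr_Lp Uo Hzp)).
- by rewrite dot_cnt.
- by rewrite dot_cnt // Hyx.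
- move=> z Hzp; rewrite dot_cnt // => /eqP; rewrite eqr_nat => Heq.
  case/andP: (Hz z (pyr_Lp Uo Hzp)) => _ /implyP/(_ Heq)/orP[] /eqv_charv; tauto.
Qed.

End Real.

Definition thn (l : seq nat) (u v : nat) : bool :=
  has (fun p : nat * nat => ((p.1 == u) && (p.2 == v)) || ((p.1 == v) && (p.2 == u)))
      (zip l (rot 1 l)).

Lemma map_zip2 (A B : Type) (f : A -> B) (s t : seq A) :
  zip (map f s) (map f t) = map (fun p => (f p.1, f p.2)) (zip s t).
Proof. by elim: s t => [|a s IH] [|b t] //=; rewrite IH. Qed.

Lemma th_nat n (s : seq 'I_n) (e : edge n) :
  th s e = thn (map val s) (val (val e).1) (val (val e).2).
Proof. by rewrite /th /tour_has_edge /thn -map_rot map_zip2 has_map. Qed.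

Lemma mkordS n i (H : (i < n)%N) : mkord n i = Some (Ordinal H).
Proof. exact: (mkordE (Ordinal H)). Qed.

Definition sq n (l : seq nat) : seq 'I_n := pmap (mkord n) l.

Lemma sq_val n l : all (fun i => i < n)%N l -> map val (sq n l) = l.
Proof.
elim: l => //= i l IH /andP[Hi Hl].
by rewrite /sq /= (mkordS Hi) /= -/(sq n l) IH.
Qed.

Fixpoint pp (x : nat) (s : seq nat) : seq (nat * nat) :=
  if s is y :: s' then (x, y) :: pp y s' else [::].

Lemma zip_cyc x t z : zip (x :: t) (rcons t z) = pp x (rcons t z).
Proof. by elim: t x => [|y t IH] x //=; rewrite IH. Qed.

Lemma pp_cat x s1 s2 : pp x (s1 ++ s2) = pp x s1 ++ pp (last x s1) s2.
Proof. by elim: s1 x => [|y s IH] x //=; rewrite IH. Qed.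

Lemma pp_iota m k : pp m (iota m.+1 k) = map (fun i => (i, i.+1)) (iota m k).
Proof. by elim: k m => [|k IH] m //=; rewrite IH. Qed.

Lemma last_iota m k : last m (iota m.+1 k) = (m + k)%N.
Proof. by elim: k m => [|k IH] m /=; rewrite ?addn0 // IH addSnnS. Qed.

Lemma has_path_iota m k u v : (u < v)%N ->
  has (fun i => ((i == u) && (i.+1 == v)) || ((i == v) && (i.+1 == u))) (iota m k)
  = [&& (m <= u)%N, (u < m + k)%N & v == u.+1].
Proof.
move=> Huv; apply/hasP/idP.
  case=> i; rewrite mem_iota => Hi /orP[] /andP[/eqP Hu /eqP Hv]; subst; lia.
move=> /and3P[H1 H2 /eqP H3]; exists u; first by rewrite mem_iota; lia.
by rewrite H3 !eqxx.
Qed.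

Lemma thn_shape A B k u v : last 0 A = 4%N -> (u < v)%N ->
  thn (0%N :: A ++ iota 5 k ++ B) u v =
  [|| has (fun p : nat * nat => ((p.1 == u) && (p.2 == v)) || ((p.1 == v) && (p.2 == u))) (pp 0 A),
      [&& (4 <= u)%N, (u < 4 + k)%N & v == u.+1] |
      has (fun p : nat * nat => ((p.1 == u) && (p.2 == v)) || ((p.1 == v) && (p.2 == u))) (pp (4 + k) (rcons B 0%N))].
Proof.
move=> HA Huv; rewrite /thn rot1_cons zip_cyc !rcons_cat pp_cat HA pp_cat pp_iota last_iota.
by rewrite !has_cat has_map /= has_path_iota.
Qed.

Lemma shape_perm m (A B : seq nat) :
  perm_eq (0%N :: A ++ B) (iota 0 5) ->
  perm_eq (0%N :: A ++ iota 5 m.+1 ++ B) (iota 0 m.+2.+4).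
Proof.
move=> HpAB.
rewrite -[m.+2.+4]/(5 + m.+1)%N iotaD -cat_cons perm_catCA perm_catC add0n perm_cat2r.
by rewrite cat_cons.
Qed.

Lemma shape_val m (A B : seq nat) :
  perm_eq (0%N :: A ++ B) (iota 0 5) ->
  map val (sq m.+2.+4 (0%N :: A ++ iota 5 m.+1 ++ B)) = 0%N :: A ++ iota 5 m.+1 ++ B.
Proof.
move=> /(shape_perm m) Hp; apply: sq_val.
by apply/allP => i; rewrite (perm_mem Hp) mem_iota.
Qed.

Lemma pyr_shape m (A B : seq nat) :
  perm_eq (0%N :: A ++ B) (iota 0 5) -> sorted ltn A -> last 0%N A = 4%N -> sorted gtn B ->
  pyramidal (sq m.+2.+4 (0%N :: A ++ iota 5 m.+1 ++ B)).
Proof.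
move=> HpAB HA Hl HB.
have Hp : perm_eq (0%N :: A ++ iota 5 m.+1 ++ B) (iota 0 m.+2.+4).
  rewrite -[m.+2.+4]/(5 + m.+1)%N iotaD -cat_cons perm_catCA perm_catC add0n perm_cat2r.
  by rewrite cat_cons.
have Hall : all (fun i => i < m.+2.+4)%N (0%N :: A ++ iota 5 m.+1 ++ B).
  by apply/allP => i; rewrite (perm_mem Hp) mem_iota.
split.
  apply: (@perm_map_inj _ _ val val_inj).
  by rewrite sq_val // val_enum_ord.
exists (A ++ iota 5 m), B; split.
  rewrite sq_val // (_ : iota 5 m.+1 = iota 5 m ++ [:: (5 + m)%N]); last by rewrite -[m.+1]addn1 iotaD.
  by rewrite -!catA.
split=> //.
case: A HA Hl {HpAB Hp Hall} => [|a A] //= HA Hl.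
by rewrite cat_path HA Hl /=; exact: (iota_ltn_sorted 4 m.+1).
Qed.

Section Part2.
Variable R : realFieldType.

Lemma part2 n : (6 <= n)%N ->
  exists x y : seq 'I_n, pyramidal x /\ pyramidal y /\
    charv R x <> charv R y /\ ~ adjacent (charv R x) (charv R y).
Proof.
move=> Hn; have [m ->] : exists m, n = m.+2.+4 by exists (n - 6)%N; lia.
pose x := sq m.+2.+4 (0%N :: [:: 3; 4] ++ iota 5 m.+1 ++ [:: 2; 1])%N.
pose y := sq m.+2.+4 (0%N :: [:: 2; 4] ++ iota 5 m.+1 ++ [:: 3; 1])%N.
pose x' := sq m.+2.+4 (0%N :: [:: 1; 3; 4] ++ iota 5 m.+1 ++ [:: 2])%N.
pose y' := sq m.+2.+4 (0%N :: [:: 1; 2; 4] ++ iota 5 m.+1 ++ [:: 3])%N.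
have Px : pyramidal x by apply: pyr_shape.
have Py : pyramidal y by apply: pyr_shape.
have Px' : pyramidal x' by apply: pyr_shape.
have Py' : pyramidal y' by apply: pyr_shape.
have thE : forall (A B : seq nat) (e : edge m.+2.+4),
    perm_eq (0%N :: A ++ B) (iota 0 5) -> last 0%N A = 4%N ->
    th (sq m.+2.+4 (0%N :: A ++ iota 5 m.+1 ++ B)) e =
    [|| has (fun p : nat * nat => ((p.1 == val (val e).1) && (p.2 == val (val e).2)) || ((p.1 == val (val e).2) && (p.2 == val (val e).1))) (pp 0 A),
      [&& (4 <= val (val e).1)%N, (val (val e).1 < 4 + m.+1)%N & val (val e).2 == (val (val e).1).+1] |
      has (fun p : nat * nat => ((p.1 == val (val e).1) && (p.2 == val (val e).2)) || ((p.1 == val (val e).2) && (p.2 == val (val e).1))) (pp (4 + m.+1) (rcons B 0%N))].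
  by move=> A B e HP HL; rewrite th_nat shape_val // thn_shape //; exact: (valP e).
pose mk (i j : nat) (Hi : (i < m.+2.+4)%N) (Hj : (j < m.+2.+4)%N) (Hij : (i < j)%N) : edge m.+2.+4 :=
  exist _ (Ordinal Hi, Ordinal Hj) Hij.
have diff : forall a b : seq 'I_m.+2.+4, (exists e, th a e != th b e) -> charv R a <> charv R b.
  move=> a b [e He] Hab; move: He; have := congr1 (fun f => f e) Hab.
  by rewrite !charvE => /eqP; rewrite eqr_nat; case: (th a e); case: (th b e).
exists x, y; split=> //; split=> //; split.
  apply: diff; exists (@mk 1 2 isT isT isT).
  by rewrite /x /y !thE //=.
apply: (nonadj (x' := x') (y' := y')) => //.
- move=> e; rewrite /x /y /x' /y' !thE //=.
  have := valP e; have := ltn_ord (val e).2.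
  move: (val (val e).1) (val (val e).2) => u v.
  by case: u => [|[|[|[|u]]]]; case: v => [|[|[|[|[|v]]]]] //=; lia.
- by exists (@mk 1 3 isT isT isT); rewrite /x /x' !thE //=.
- by exists (@mk 3 4 isT isT isT); rewrite /y /x' !thE //=.
Qed.

End Part2.

Definition X3 : seq 'I_6 := sq 6 [:: 0; 1; 3; 4; 5; 2]%N.
Definition Y3 : seq 'I_6 := sq 6 [:: 0; 1; 2; 4; 5; 3]%N.

Definition F3 := all (fun x => all (fun y =>
   (code x == [:: true; false; false]) ==> (code y == [:: false; true; false]) ==>
   [&& all (fun e => (th x e + th y e == th X3 e + th Y3 e)%N) (myedges 6),
       ~~ eqv X3 x & ~~ eqv X3 y]) (Lp 6)) (Lp 6).

Lemma F3_true : F3. Proof. by vm_compute. Qed.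
Lemma F1_4 : F1 4. Proof. by vm_compute. Qed.
Lemma F1_5 : F1 5. Proof. by vm_compute. Qed.
Lemma Uo4 : uniq (myords 4). Proof. by vm_compute. Qed.
Lemma Uo5 : uniq (myords 5). Proof. by vm_compute. Qed.
Lemma Uo6 : uniq (myords 6). Proof. by vm_compute. Qed.
Lemma Ue4 : uniq (myedges 4). Proof. by vm_compute. Qed.
Lemma Ue5 : uniq (myedges 5). Proof. by vm_compute. Qed.

Lemma PX3 : pyramidal X3.
Proof. exact: (@pyr_shape 0 [:: 1; 3; 4]%N [:: 2]%N). Qed.
Lemma PY3 : pyramidal Y3.
Proof. exact: (@pyr_shape 0 [:: 1; 2; 4]%N [:: 3]%N). Qed.

Lemma neqv_ex n (a b : seq 'I_n) : ~~ eqv a b -> exists e, th a e != th b e.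
Proof. by case/allPn => e _ H; exists e. Qed.

Lemma part3 (R : realFieldType) (x y : seq 'I_6) : pyramidal x -> pyramidal y ->
  code x = [:: true; false; false] -> code y = [:: false; true; false] ->
  ~ adjacent (charv R x) (charv R y).
Proof.
move=> Hx Hy Hcx Hcy.
have /allP /(_ x (pyr_Lp Uo6 Hx)) /allP /(_ y (pyr_Lp Uo6 Hy)) := F3_true.
rewrite Hcx Hcy !eqxx /= => /and3P[Hs H1 H2].
have Hs2 : forall e, e \in myedges 6 -> (th x e + th y e == th X3 e + th Y3 e)%N by apply/allP.
apply: (nonadj (x' := X3) (y' := Y3)) PX3 PY3 _ (neqv_ex H1) (neqv_ex H2).
by move=> e; apply/eqP; apply: Hs2; apply: myedges_all.
Qed.

Unset Implicit Arguments.
Local Open Scope ring_scope.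

Theorem mainTheorem5 (R : realFieldType) :
  (forall n : nat, (4 <= n <= 5)%N ->
     forall x y : seq 'I_n, pyramidal x -> pyramidal y ->
       charv R x <> charv R y -> adjacent (charv R x) (charv R y)) /\
  (forall n : nat, (6 <= n)%N ->
     exists x y : seq 'I_n, pyramidal x /\ pyramidal y /\
       charv R x <> charv R y /\ ~ adjacent (charv R x) (charv R y)) /\
  (forall x y : seq 'I_6, pyramidal x -> pyramidal y ->
     code x = [:: true; false; false] -> code y = [:: false; true; false] ->
     ~ adjacent (charv R x) (charv R y)).
Proof.
split; last split; last exact: part3.
- move=> n /andP[H4 H5].
  have [->|->] : n = 4%N \/ n = 5%N by lia.
    exact: (part1 Uo4 Ue4 F1_4).
  exact: (part1 Uo5 Ue5 F1_5).
- exact: part2.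
Qed.
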